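(* Let $Q$ be a quantity space over a field $K$ with a basis $E=\{e_1,\ldots,e_n\}$. Then: (1) $\mu_E(xy)=\mu_E(x)\mu_E(y)$ for all $x,y\in Q$; (2) for all $x\in Q$ with $\mu_E(x)\neq0$, $x^{-1}$ exists and $\mu_E(x^{-1})=\mu_E(x)^{-1}$; (3) $\mu_E(\lambda\cdot x)=\lambda\,\mu_E(x)$ for all $\lambda\in K$, $x\in Q$; (4) $\mu_E(x+y)=\mu_E(x)+\mu_E(y)$ for all $x,y\in Q$ with $x\sim y$.
   Context: A scalable monoid over a (unital, associative) ring $R$ is a monoid $X$ (identity $1_X$, product written $xy$) together with a map $R\times X\to X$, $(\alpha,x)\mapsto\alpha\cdot x$, such that $1\cdot x=x$, $\alpha\cdot(\beta\cdot x)=\alpha\beta\cdot x$ and $\alpha\cdot(xy)=(\alpha\cdot x)y=x(\alpha\cdot y)$. A quantity space over a field $K$ is a commutative scalable monoid $Q$ over $K$ for which there exists a basis, i.e. a finite set $\{e_1,\ldots,e_n\}$ of invertible elements of $Q$ such that every $x\in Q$ has a unique expansion $x=\mu\cdot\prod_{i=1}^n e_i^{k_i}$ with $\mu\in K$ and $k_i\in\mathbb{Z}$; the scalar $\mu$ in this expansion is the measure $\mu_E(x)$ of $x$ relative to $E$. On $Q$, $x\sim y$ iff $\alpha\cdot x=\beta\cdot y$ for some $\alpha,\beta\in K$. A unit element for a class $\mathsf{C}$ of $\sim$ is some $u\in\mathsf{C}$ such that every $x\in\mathsf{C}$ equals $\lambda\cdot u$ for some $\lambda\in K$ and $\lambda\cdot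 u=\lambda'\cdot u$ implies $\lambda=\lambda'$. For $x\sim y$, with $u$ a unit element for their class, $x=\rho\cdot u$, $y=\sigma\cdot u$, the sum is $x+y:=(\rho+\sigma)\cdot u$ (independent of $u$). *)

(* Defs.v *)
From mathcomp Require Import all_boot all_order all_algebra.
From Stdlib Require Import ClassicalEpsilon.
Set Implicit Arguments. Unset Strict Implicit. Unset Printing Implicit Defensive.
Import GRing.Theory.
Local Open Scope ring_scope.

Section QS.
Variables (K : fieldType) (Q : Type) (mul : Q -> Q -> Q) (one : Q)
          (sc : K -> Q -> Q).

Definition comm_scalable_monoid : Prop :=
  (forall x y z, mul x (mul y z) = mul (mul x y) z) /\
  (forall x, mul one x = x) /\ (forall x, mul x one = x) /\
  (forall x y, mul x y = mul y x) /\
  (forall x, sc 1 x = x) /\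
  (forall a b x, sc a (sc b x) = sc (a * b) x) /\
  (forall a x y, sc a (mul x y) = mul (sc a x) y) /\
  (forall a x y, sc a (mul x y) = mul x (sc a y)).

Definition invertible (x : Q) : Prop := exists y, mul x y = one /\ mul y x = one.

Definition qinv (x : Q) : Q :=
  epsilon (inhabits one) (fun y => mul x y = one /\ mul y x = one).

Definition npow (x : Q) (m : nat) : Q := iter m (mul x) one.

Definition zpow (x : Q) (k : int) : Q :=
  match k with Posz m => npow x m | Negz m => npow (qinv x) m.+1 end.

Variables (n : nat) (e : 'I_n -> Q).

Definition monomial (k : 'I_n -> int) : Q :=
  foldr (fun i acc => mul (zpow (e i) (k i)) acc) one (enum 'I_n).

Definition is_basis : Prop :=
  (forall i, invertible (e i)) /\
  (forall x, exists mu k, x = sc mu (monomial k)) /\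
  (forall mu mu' k k', sc mu (monomial k) = sc mu' (monomial k') ->
      mu = mu' /\ k =1 k').

Definition measure (x : Q) : K :=
  epsilon (inhabits 0) (fun mu => exists k, x = sc mu (monomial k)).

End QS.

Section Sum.
Variables (K : fieldType) (Q : Type) (sc : K -> Q -> Q) (dflt : Q).

Definition qsim (x y : Q) : Prop := exists a b, sc a x = sc b y.

Definition is_unit_for (x u : Q) : Prop :=
  qsim u x /\ (forall z, qsim z x -> exists l, z = sc l u) /\
  (forall l l', sc l u = sc l' u -> l = l').

Definition coord (u z : Q) : K := epsilon (inhabits 0) (fun l => z = sc l u).

Definition qadd (x y : Q) : Q :=
  let u := epsilon (inhabits x) (is_unit_for x) in
  sc (coord u x + coord u y) u.
End Sum.

(* Main.v *)
Require Import Defs.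
From mathcomp Require Import all_boot all_order all_algebra.
From mathcomp Require Import zify ring.
From Stdlib Require Import ClassicalEpsilon.
Import GRing.Theory.
Local Open Scope ring_scope.

Theorem proposition3p14 (K : fieldType) (Q : Type) (mul : Q -> Q -> Q) (one : Q)
    (sc : K -> Q -> Q) (HQ : comm_scalable_monoid mul one sc)
    (n : nat) (e : 'I_n -> Q) (HE : is_basis mul one sc e) :
  [/\ (forall x y, measure mul one sc e (mul x y)
                   = measure mul one sc e x * measure mul one sc e y),
      (forall x, measure mul one sc e x != 0 ->
         exists y, mul x y = one /\ mul y x = one /\
                   measure mul one sc e y = (measure mul one sc e x)^-1),
      (forall (l : K) x, measure mul one sc e (sc l x) = l * measure mul one sc e x) &
      (forall x y, qsim sc x y ->
         measure mul one sc e (qadd sc x y)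
         = measure mul one sc e x + measure mul one sc e y)].
Proof.
case: HQ => mA [m1l [m1r [mC [s1 [sM [sl sr]]]]]].
case: HE => Hinv [Hex Huniq].
set mon := monomial mul one e.
set meas := measure mul one sc e.
have scmul : forall a b x y, mul (sc a x) (sc b y) = sc (a * b) (mul x y).
  by move=> a b x y; rewrite -sl -sr sM.
have measE : forall mu k, meas (sc mu (mon k)) = mu.
  move=> mu k; rewrite /meas /measure.
  set P := (fun mu0 => _).
  have : P (epsilon (inhabits 0) P) by apply: epsilon_spec; exists mu; exists k.
  by case=> k' /esym /Huniq [-> _].
have zstep : forall i (k : int),
    zpow mul one (e i) (k + 1) = mul (e i) (zpow mul one (e i) k) /\
    zpow mul one (e i) (k - 1) = mul (qinv mul one (e i)) (zpow mul one (e i) k).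
  move=> i k.
  have [uv vu] : mul (e i) (qinv mul one (e i)) = one /\ mul (qinv mul one (e i)) (e i) = one.
    exact: (epsilon_spec (inhabits one) (fun y => mul (e i) y = one /\ mul y (e i) = one) (Hinv i)).
  case: k => [[|m]|m].
  - split; first by have -> : (Posz 0 + 1 = Posz 1)%R by lia.
    by rewrite /= /npow /= m1r.
  - split; first by have -> : (Posz m.+1 + 1 = Posz m.+2)%R by lia.
    have -> : (Posz m.+1 - 1 = Posz m)%R by lia.
    by rewrite /= /npow /= mA vu m1l.
  - split.
    + case: m => [|m].
      * have -> : (Negz 0 + 1 = Posz 0)%R by lia.
        by rewrite /= /npow /= m1r uv.
      * have -> : (Negz m.+1 + 1 = Negz m)%R by lia.
        by rewrite /= /npow /= mA uv m1l.
    + have -> : (Negz m - 1 = Negz m.+1)%R by lia.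
      by [].
have zadd : forall i (a b : int),
    zpow mul one (e i) (a + b) = mul (zpow mul one (e i) a) (zpow mul one (e i) b).
  move=> i a b; case: a => m.
  - elim: m => [|m IH]; first by rewrite add0r /= /npow /= m1l.
    have -> : (Posz m.+1 + b = (Posz m + b) + 1)%R by lia.
    have -> : (Posz m.+1 = Posz m + 1)%R by lia.
    by rewrite !(proj1 (zstep _ _)) IH mA.
  - elim: m => [|m IH].
    + have -> : (Negz 0 + b = b - 1)%R by lia.
      by rewrite (proj2 (zstep _ _)) /= /npow /= m1r.
    + have -> : (Negz m.+1 + b = (Negz m + b) - 1)%R by lia.
      have -> : (Negz m.+1 = Negz m - 1)%R by lia.
      by rewrite !(proj2 (zstep _ _)) IH mA.
have foldmul : forall (s : seq 'I_n) (f g : 'I_n -> Q),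
    mul (foldr (fun i acc => mul (f i) acc) one s) (foldr (fun i acc => mul (g i) acc) one s)
    = foldr (fun i acc => mul (mul (f i) (g i)) acc) one s.
  move=> s f g; elim: s => [|i s IH] /=; first by rewrite m1l.
  rewrite -IH -!mA; congr (mul (f i)).
  by rewrite mA [mul _ (g i)]mC -mA.
have monext : forall k k', k =1 k' -> mon k = mon k'.
  move=> k k' H; rewrite /mon /monomial; elim: (enum 'I_n) => //= i s ->.
  by rewrite H.
have monmul : forall k k', mul (mon k) (mon k') = mon (fun i => k i + k' i).
  move=> k k'; rewrite /mon /monomial foldmul.
  by elim: (enum 'I_n) => //= i s ->; rewrite zadd.
have mon0 : mon (fun _ => 0) = one.
  by rewrite /mon /monomial; elim: (enum 'I_n) => //= i s ->; rewrite m1l.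
split.
- move=> x y.
  case: (Hex x) => a [k ->]; case: (Hex y) => b [k' ->].
  by rewrite scmul monmul !measE.
- move=> x.
  case: (Hex x) => a [k ->]; rewrite measE => a0.
  have xy : mul (sc a (mon k)) (sc a^-1 (mon (fun i => - k i))) = one.
    rewrite scmul monmul divff // s1 -mon0; apply: monext => i; exact: subrr.
  exists (sc a^-1 (mon (fun i => - k i))); split => //; split.
  + by rewrite mC.
  + by rewrite measE.
- move=> l x; case: (Hex x) => a [k ->].
  by rewrite sM !measE.
- move=> x y Hxy.
  case: (Hex x) => mu [k Ex].
  have Hu : is_unit_for sc x (mon k).
    split; first by exists mu, 1; rewrite s1.
    split.
    + move=> z [a [b Hab]].
      case: (Hex z) => nu [k' Ez].
      exists nu; rewrite Ez; congr sc; apply: monext => i.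
      move: Hab; rewrite Ez Ex !sM => /Huniq [_ H]; exact: H.
    + by move=> l l' /Huniq [].
  rewrite /qadd.
  set u := epsilon _ _.
  have [Hu1 [Hu2 Hu3]] : is_unit_for sc x u by exact: (epsilon_spec (inhabits x) (is_unit_for sc x) (ex_intro _ (mon k) Hu)).
  have cx : x = sc (Defs.coord sc u x) u.
    rewrite /coord; apply: (epsilon_spec (inhabits 0) (fun l => x = sc l u)).
    apply: Hu2; by exists 1, 1.
  have cy : y = sc (Defs.coord sc u y) u.
    rewrite /coord; apply: (epsilon_spec (inhabits 0) (fun l => y = sc l u)).
    apply: Hu2.
    by case: Hxy => a [b H]; exists b, a.
  case: (Hex u) => c [k1 Eu].
  clearbody u; rewrite {}Eu in cx cy *.
  move: cx cy; set rx := Defs.coord sc _ x; set ry := Defs.coord sc _ y.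
  clearbody rx ry => cx cy.
  rewrite [in X in _ = X + _]cx [in X in _ = _ + X]cy !sM (measE ((rx+ry)*c) k1) (measE (rx*c) k1) (measE (ry*c) k1). exact: mulrDl.
Qed.
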